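(* Let $P$ be the uniform distribution on $[0,1]$, let $\beta=\{\frac14,\frac12\}$, and let $V_n$ ($n\geq2$) be the $n$th conditional quantization error of $P$ with respect to $\beta$, with $V_\infty=\lim_{n\to\infty}V_n$. Then the conditional quantization dimension \[D(P)=\lim_{n\to\infty}\frac{2\log n}{-\log(V_n-V_\infty)}\] exists and $D(P)=1$.
   Context: For a Borel probability measure $P$ on $\mathbb{R}$ and a finite set $\beta\subset\mathbb{R}$ with $\mathrm{card}(\beta)=r$, for $n\geq r$ the $n$th conditional quantization error is $V_n=\inf\{\int\min_{a\in\alpha\cup\beta}(x-a)^2\,dP(x):\alpha\subset\mathbb{R},\ \mathrm{card}(\alpha)\leq n-r\}$. *)

(* Defs.v *)
From Stdlib Require Import Reals List.
From Coquelicot Require Import Coquelicot.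
Open Scope R_scope.

(* min_{a in l} (x - a)^2 for a nonempty finite list l (0 for the empty list,
   never used since beta is nonempty). *)
Definition minsq (x : R) (l : list R) : R :=
  match l with
  | nil => 0
  | a :: l' => fold_right (fun b m => Rmin ((x - b) ^ 2) m) ((x - a) ^ 2) l'
  end.

Definition unif_cost (beta alpha : list R) : R :=
  RInt (fun x => minsq x (alpha ++ beta)) 0 1.

Definition cond_qerr (beta : list R) (n : nat) : R :=
  real (Glb_Rbar (fun v => exists alpha : list R,
          (length alpha <= n - length beta)%nat /\ v = unif_cost beta alpha)).

Definition beta0 : list R := (1/4) :: (1/2) :: nil.

(* Main.v *)
Require Import Defs.
From Stdlib Require Import Reals List Lra Lia.
From Coquelicot Require Import Coquelicot.
Open Scope R_scope.

Definition fmin (x : R) := fun b m => Rmin ((x - b) ^ 2) m.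

Lemma fold_props x v l :
  fold_right (fmin x) v l <= v /\
  (forall b, In b l -> fold_right (fmin x) v l <= (x - b) ^ 2) /\
  (fold_right (fmin x) v l = v \/ exists b, In b l /\ fold_right (fmin x) v l = (x - b) ^ 2).
Proof.
  induction l as [|c l IH]; cbn [fold_right In].
  - split; [lra|]. split; [tauto|]. now left.
  - destruct IH as [H1 [H2 H3]].
    change (fmin x c (fold_right (fmin x) v l)) with (Rmin ((x - c) ^ 2) (fold_right (fmin x) v l)).
    split; [|split].
    + pose proof (Rmin_r ((x - c) ^ 2) (fold_right (fmin x) v l)). lra.
    + intros b [<-|Hb].
      * apply Rmin_l.
      * pose proof (Rmin_r ((x - c) ^ 2) (fold_right (fmin x) v l)). specialize (H2 b Hb). lra.
    + unfold Rmin. destruct Rle_dec.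
      * right. exists c. split; auto.
      * destruct H3 as [H3|[b [Hb Hb']]]; [now left|]. right. exists b. split; auto.
Qed.

Lemma minsq_le x l a : In a l -> minsq x l <= (x - a) ^ 2.
Proof.
  destruct l as [|c l]; [simpl; tauto|]. intros H. unfold minsq.
  change (fun b m => Rmin ((x - b) ^ 2) m) with (fmin x).
  destruct (fold_props x ((x-c)^2) l) as [H1 [H2 _]].
  destruct H as [<-|H]; auto.
Qed.

Lemma minsq_att x l : l <> nil -> exists a, In a l /\ minsq x l = (x - a) ^ 2.
Proof.
  destruct l as [|c l]; [tauto|]. intros _. unfold minsq.
  change (fun b m => Rmin ((x - b) ^ 2) m) with (fmin x).
  destruct (fold_props x ((x-c)^2) l) as [_ [_ [H|[b [Hb E]]]]].
  - exists c. simpl; auto.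
  - exists b. simpl; auto.
Qed.

Lemma cont_Rmin (f g : R -> R) x : continuous f x -> continuous g x ->
  continuous (fun y => Rmin (f y) (g y)) x.
Proof.
  intros Hf Hg.
  apply continuous_ext with (f := fun y => mult (minus (plus (f y) (g y)) (Rabs (minus (f y) (g y)))) (/2)).
  { intros y. unfold mult, minus, plus, opp; simpl. unfold Rmin, Rabs. destruct Rle_dec; destruct Rcase_abs; lra. }
  apply (@continuous_mult R_UniformSpace R_AbsRing (fun y => (minus (plus (f y) (g y)) (Rabs (minus (f y) (g y))))) (fun _ => /2)); [|apply continuous_const].
  apply (@continuous_minus R_UniformSpace R_AbsRing R_NormedModule (fun y => plus (f y) (g y)) (fun y => Rabs (minus (f y) (g y)))).
  apply (@continuous_plus R_UniformSpace R_AbsRing R_NormedModule f g); auto.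
  apply continuous_Rabs_comp. apply (@continuous_minus R_UniformSpace R_AbsRing R_NormedModule f g); auto.
Qed.

Lemma minsq_cont l x : continuous (fun y => minsq y l) x.
Proof.
  destruct l as [|c l]; simpl.
  - apply continuous_const.
  - induction l as [|b l IH]; simpl.
    + apply (@ex_derive_continuous R_AbsRing R_NormedModule). auto_derive. exact I.
    + apply cont_Rmin; auto. apply (@ex_derive_continuous R_AbsRing R_NormedModule). auto_derive. exact I.
Qed.

Definition psi (d a x : R) := d ^ 4 / (d ^ 2 + (x - a) ^ 2).
Definition sumpsi d l x := fold_right (fun a s => psi d a x + s) 0 l.

Lemma psi_pos d a x : d > 0 -> 0 <= psi d a x.
Proof.
  intros H. unfold psi. pose proof (pow2_ge_0 (x-a)). pose proof (pow_lt d 2 H).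
  pose proof (pow_lt d 4 H). apply Rlt_le, Rdiv_lt_0_compat; lra.
Qed.

Lemma sumpsi_pos d l x : d > 0 -> 0 <= sumpsi d l x.
Proof.
  intros H. induction l; simpl; [lra|]. pose proof (psi_pos d a x H). lra.
Qed.

Lemma sumpsi_ge d l x a : d > 0 -> In a l -> psi d a x <= sumpsi d l x.
Proof.
  intros H. induction l as [|b l IH]; simpl; [tauto|]. intros [<-|Hi].
  - pose proof (sumpsi_pos d l x H). lra.
  - pose proof (psi_pos d b x H). specialize (IH Hi). lra.
Qed.

Lemma psi_key d a x : d > 0 -> d ^ 2 <= (x - a) ^ 2 + psi d a x.
Proof.
  intros H. unfold psi. set (t := (x - a) ^ 2).
  assert (0 <= t) by apply pow2_ge_0. assert (0 < d ^ 2) by (apply pow_lt; lra).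
  assert (E : d ^ 4 = d ^ 2 * d ^ 2) by ring. rewrite E.
  assert (E2 : d ^ 2 * d ^ 2 / (d ^ 2 + t) = d ^ 2 - t + t * t / (d ^ 2 + t)) by (field; lra).
  rewrite E2. assert (0 <= t * t / (d ^ 2 + t)).
  { apply Rmult_le_pos. nra. apply Rlt_le, Rinv_0_lt_compat. lra. }
  lra.
Qed.

Lemma pointwise d l x : d > 0 -> l <> nil -> d ^ 2 - sumpsi d l x <= minsq x l.
Proof.
  intros H Hl. destruct (minsq_att x l Hl) as [a [Ha E]]. rewrite E.
  pose proof (sumpsi_ge d l x a H Ha). pose proof (psi_key d a x H). lra.
Qed.

Lemma aux_der (d a x : R) : d > 0 -> d * (d * (d * 1)) *
 (1 * / d * / (1 + (x + - a) * / d * ((x + - a) * / d * 1))) =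
 d ^ 4 / (d ^ 2 + (x - a) ^ 2).
Proof.
intros H.
assert (0 < d^2 + (x-a)^2). { pose proof (pow2_ge_0 (x-a)). pose proof (pow_lt d 2 H). lra. }
assert (0 < 1 + (x + - a) * / d * ((x + - a) * / d * 1)). { pose proof (Rle_0_sqr ((x + - a) * / d)). unfold Rsqr in *. lra. }
field. split; lra.
Qed.

Lemma psi_int d a : d > 0 -> exists I, is_RInt (psi d a) 0 1 I /\ I <= PI * d ^ 3.
Proof.
  intros H.
  exists (minus (d^3 * atan ((1 - a)/d)) (d^3 * atan ((0 - a)/d))). split.
  - apply (is_RInt_derive (fun y => d^3 * atan ((y - a)/d)) (psi d a)).
    + intros x _. unfold psi. auto_derive. exact I. apply aux_der; auto.
    + intros x _. unfold psi. apply (@ex_derive_continuous R_AbsRing R_NormedModule). auto_derive.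
      pose proof (pow2_ge_0 (x-a)). pose proof (pow_lt d 2 H). simpl in *. lra.
  - unfold minus, plus, opp; simpl.
    pose proof (atan_bound ((1 - a)/d)). pose proof (atan_bound ((0 - a)/d)).
    assert (0 < d^3) by (apply pow_lt; lra). nra.
Qed.

Lemma sum_int d l : d > 0 -> exists I, is_RInt (sumpsi d l) 0 1 I /\ I <= INR (length l) * PI * d ^ 3.
Proof.
  intros H. induction l as [|a l IH].
  - exists 0. split.
    + apply is_RInt_ext with (f := fun _ => 0). { intros; reflexivity. }
      replace 0 with (scal (1 - 0) 0) at 2 by (unfold scal; simpl; unfold mult; simpl; ring).
      apply (@is_RInt_const R_NormedModule).
    + simpl. lra.
  - destruct IH as [I [HI HIb]]. destruct (psi_int d a H) as [J [HJ HJb]].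
    exists (plus J I). split.
    + apply is_RInt_ext with (f := fun y => plus (psi d a y) (sumpsi d l y)).
      { intros; reflexivity. }
      apply (@is_RInt_plus R_NormedModule); auto.
    + change (plus J I) with (J + I). change (length (a :: l)) with (S (length l)). rewrite S_INR. lra.
Qed.

Lemma ex_minsq l : ex_RInt (fun x => minsq x l) 0 1.
Proof. apply (@ex_RInt_continuous R_CompleteNormedModule). intros; apply minsq_cont. Qed.

Lemma lower l (n : nat) : l <> nil -> (length l <= n)%nat ->
  1 / (128 * INR n ^ 2) <= RInt (fun x => minsq x l) 0 1.
Proof.
  intros Hl Hn.
  assert (Hn1 : (1 <= n)%nat) by (destruct l; [tauto|simpl in Hn; lia]).
  assert (HnR : 1 <= INR n) by (apply (le_INR 1); auto).
  set (d := 1 / (8 * INR n)).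
  assert (Hd : d > 0) by (unfold d; apply Rdiv_lt_0_compat; lra).
  destruct (sum_int d l Hd) as [I [HI HIb]].
  assert (Hg : is_RInt (fun x => d ^ 2 - sumpsi d l x) 0 1 (d ^ 2 - I)).
  { apply is_RInt_ext with (f := fun x => minus (d ^ 2) (sumpsi d l x)). { intros; reflexivity. }
    replace (d ^ 2 - I) with (minus (scal (1 - 0) (d ^ 2)) I).
    2: { unfold minus, plus, opp, scal; simpl; unfold mult; simpl; ring. }
    apply (@is_RInt_minus R_NormedModule (fun _ => d ^ 2)); auto. apply (@is_RInt_const R_NormedModule). }
  assert (Hle : RInt (fun x => d ^ 2 - sumpsi d l x) 0 1 <= RInt (fun x => minsq x l) 0 1).
  { apply RInt_le; [lra| eexists; eauto | apply ex_minsq |].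
    intros; apply pointwise; auto. }
  rewrite (is_RInt_unique _ _ _ _ Hg) in Hle.
  assert (Hlen : INR (length l) <= INR n) by (apply le_INR; auto).
  pose proof PI_4. pose proof PI_RGT_0.
  assert (HI2 : I <= INR n * 4 * d ^ 3).
  { assert (0 < d ^ 3) by (apply pow_lt; lra).
    assert (INR (length l) * PI <= INR n * 4).
    { apply Rmult_le_compat; try lra. apply pos_INR. }
    nra. }
  assert (E1 : INR n * 4 * d ^ 3 = d ^ 2 / 2).
  { unfold d. field. lra. }
  assert (E2 : 1 / (128 * INR n ^ 2) = d ^ 2 / 2).
  { unfold d. field. lra. }
  lra.
Qed.

Definition grid (c : nat) : list R := map (fun k => (2 * INR k + 1) / (2 * INR c)) (seq 0 c).

Lemma cover j : (1 <= j)%nat -> forall y, 0 <= y <= INR j -> exists k, (k < j)%nat /\ INR k <= y <= INR k + 1.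
Proof.
  induction j as [|j IH]; intros Hj y Hy; [lia|].
  destruct (Nat.eq_dec j 0) as [->|Hj0].
  - exists 0%nat. split; [lia|]. simpl in *. lra.
  - destruct (Rle_dec y (INR j)).
    + destruct (IH ltac:(lia) y ltac:(lra)) as [k [Hk Hk']]. exists k. split; [lia|auto].
    + exists j. split; [lia|]. rewrite S_INR in Hy. lra.
Qed.

Lemma grid_close c x : (1 <= c)%nat -> 0 <= x <= 1 ->
  exists a, In a (grid c) /\ (x - a) ^ 2 <= 1 / (4 * INR c ^ 2).
Proof.
  intros Hc Hx.
  assert (HcR : 1 <= INR c) by (apply (le_INR 1); auto).
  destruct (cover c Hc (x * INR c)) as [k [Hk Hk']].
  { split; [nra|]. nra. }
  exists ((2 * INR k + 1) / (2 * INR c)). split.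
  - unfold grid. apply (in_map (fun k => (2 * INR k + 1) / (2 * INR c))). apply in_seq. lia.
  - assert (E : x - (2 * INR k + 1) / (2 * INR c) = (x * INR c - INR k - 1/2) / INR c) by (field; lra).
    rewrite E. set (u := x * INR c - INR k - 1/2).
    assert (u ^ 2 <= 1/4) by (unfold u; nra).
    assert (E2 : (u / INR c) ^ 2 = u ^ 2 / INR c ^ 2) by (field; lra). rewrite E2.
    assert (E3 : 1 / (4 * INR c ^ 2) = (1/4) / INR c ^ 2) by (field; lra). rewrite E3.
    unfold Rdiv. apply Rmult_le_compat_r; [|lra].
    apply Rlt_le, Rinv_0_lt_compat. apply pow_lt. lra.
Qed.

Lemma upper c l : (1 <= c)%nat -> RInt (fun x => minsq x (grid c ++ l)) 0 1 <= 1 / (4 * INR c ^ 2).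
Proof.
  intros Hc.
  assert (H : RInt (fun x => minsq x (grid c ++ l)) 0 1 <= RInt (fun _ => 1 / (4 * INR c ^ 2)) 0 1).
  { apply RInt_le; [lra| apply ex_minsq | apply ex_RInt_const |].
    intros x Hx. destruct (grid_close c x Hc ltac:(lra)) as [a [Ha Ha']].
    eapply Rle_trans; [apply minsq_le|exact Ha']. apply in_or_app; auto. }
  rewrite RInt_const in H. unfold scal in H; simpl in H; unfold mult in H; simpl in H. replace (1 / (4 * INR c ^ 2)) with ((1 - 0) * (1 / (4 * (INR c * (INR c * 1))))) by (simpl; ring). exact H.
Qed.

Lemma grid_len c : length (grid c) = c.
Proof. unfold grid. rewrite length_map, length_seq. reflexivity. Qed.

Lemma bounds n : (4 <= n)%nat -> 1 / (128 * INR n ^ 2) <= cond_qerr beta0 n <= 1 / (INR n ^ 2).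
Proof.
  intros Hn. unfold cond_qerr.
  set (E := fun v => exists alpha : list R,
          (length alpha <= n - length beta0)%nat /\ v = unif_cost beta0 alpha).
  destruct (Glb_Rbar_correct E) as [Hlb Hglb].
  assert (HnR : 4 <= INR n) by (replace 4 with (INR 4) by (simpl; lra); apply le_INR; auto).
  set (u := unif_cost beta0 (grid (n - 2))).
  assert (Hu : E u).
  { exists (grid (n - 2)). rewrite grid_len. split; [simpl; lia|reflexivity]. }
  assert (Hub : u <= 1 / (INR n ^ 2)).
  { unfold u, unif_cost. eapply Rle_trans; [apply upper; lia|].
    rewrite minus_INR by lia. simpl.
    apply Rmult_le_compat_l; [lra|]. apply Rinv_le_contravar; nra. }
  assert (Hl : is_lb_Rbar E (1 / (128 * INR n ^ 2))).
  { intros x [alpha [Ha ->]]. simpl. unfold unif_cost. apply lower.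
    - destruct alpha; discriminate.
    - rewrite length_app. simpl in *. lia. }
  specialize (Hglb _ Hl). specialize (Hlb u Hu).
  destruct (Glb_Rbar E) as [r| |]; simpl in *; try tauto. lra.
Qed.

Lemma ratio (L W c e : R) : 0 < c -> 0 < e -> c / (2 * e) < L -> 2 * L <= W <= 2 * L + c ->
  Rabs (2 * L / W - 1) < e.
Proof.
  intros Hc He HL [H1 H2].
  assert (HL0 : 0 < L). { assert (0 < c / (2 * e)) by (apply Rdiv_lt_0_compat; lra). lra. }
  assert (HW : 0 < W) by lra.
  assert (E : 2 * L / W - 1 = - ((W - 2 * L) / W)) by (field; lra). rewrite E, Rabs_Ropp.
  rewrite Rabs_right. 2: { apply Rle_ge. apply Rdiv_le_0_compat; lra. }
  assert (Hc2 : c < 2 * e * L).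
  { apply (Rmult_lt_compat_l (2 * e)) in HL; [|lra].
    replace (2 * e * (c / (2 * e))) with c in HL by (field; lra). lra. }
  apply (Rmult_lt_reg_r W); [lra|]. unfold Rdiv. rewrite Rmult_assoc, Rinv_l by lra.
  nra.
Qed.

Lemma ln_inv_sq n : 0 < n -> ln (1 / (n ^ 2)) = - (2 * ln n).
Proof.
  intros H. unfold Rdiv. rewrite Rmult_1_l, ln_Rinv by (apply pow_lt; lra).
  rewrite ln_pow by lra. simpl. ring.
Qed.

Lemma ln_inv_sq128 n : 0 < n -> ln (1 / (128 * n ^ 2)) = - (ln 128 + 2 * ln n).
Proof.
  intros H. unfold Rdiv. rewrite Rmult_1_l, ln_Rinv.
  2: { apply Rmult_lt_0_compat; [lra|apply pow_lt; lra]. }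
  rewrite ln_mult by (try lra; apply pow_lt; lra).
  rewrite ln_pow by lra. simpl. ring.
Qed.

Theorem theorem3p11 :
  exists Vinf : R,
    is_lim_seq (fun n => cond_qerr beta0 n) Vinf /\
    is_lim_seq (fun n => 2 * ln (INR n) / (- ln (cond_qerr beta0 n - Vinf))) 1.
Proof.
  exists 0.
  assert (Hev4 : eventually (fun n => (4 <= n)%nat)) by (exists 4%nat; auto).
  assert (HevM : forall M, eventually (fun n => M < INR n)).
  { intros M. pose proof is_lim_seq_INR as H. apply is_lim_seq_spec in H. exact (H M). }
  split.
  - apply is_lim_seq_spec. intros eps.
    generalize (filter_and _ _ Hev4 (HevM (/ eps))). apply filter_imp. intros n [Hn HM].
    destruct (bounds n Hn) as [B1 B2].
    assert (HnR : 4 <= INR n) by (replace 4 with (INR 4) by (simpl; lra); apply le_INR; auto).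
    pose proof (cond_pos eps) as He.
    assert (B0 : 0 < 1 / (128 * INR n ^ 2)).
    { apply Rdiv_lt_0_compat; [lra|]. apply Rmult_lt_0_compat; [lra|apply pow_lt; lra]. }
    rewrite Rminus_0_r, Rabs_right by lra.
    assert (Hen : 1 < eps * INR n).
    { apply (Rmult_lt_compat_l eps) in HM; [|lra]. rewrite Rinv_r in HM; lra. }
    assert (1 / INR n ^ 2 < eps).
    { apply (Rmult_lt_reg_r (INR n ^ 2)); [apply pow_lt; lra|].
      unfold Rdiv. rewrite Rmult_1_l, Rinv_l by (apply pow_nonzero; lra). simpl. nra. }
    lra.
  - apply is_lim_seq_spec. intros eps.
    pose proof (cond_pos eps) as He.
    assert (Hc : 0 < ln 128).
    { rewrite <- ln_1. apply ln_increasing; lra. }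
    generalize (filter_and _ _ Hev4 (HevM (exp (ln 128 / (2 * eps))))). apply filter_imp.
    intros n [Hn HM].
    destruct (bounds n Hn) as [B1 B2].
    assert (HnR : 4 <= INR n) by (replace 4 with (INR 4) by (simpl; lra); apply le_INR; auto).
    assert (B0 : 0 < 1 / (128 * INR n ^ 2)).
    { apply Rdiv_lt_0_compat; [lra|]. apply Rmult_lt_0_compat; [lra|apply pow_lt; lra]. }
    assert (HL : ln 128 / (2 * eps) < ln (INR n)).
    { rewrite <- (ln_exp (ln 128 / (2 * eps))). apply ln_increasing; auto. apply exp_pos. }
    rewrite Rminus_0_r.
    apply ratio with (c := ln 128); auto.
    pose proof (ln_le _ _ B0 B1). assert (Vp : 0 < cond_qerr beta0 n) by lra. pose proof (ln_le _ _ Vp B2).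
    rewrite ln_inv_sq128 in * by lra. rewrite ln_inv_sq in * by lra. lra.
Qed.
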